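(* Let $(W,S)$ be a finitely generated Coxeter system and $v\in W$. Then $$\sum_{x\le v}\mu(e,x)\,t^{|S(x)|}=(1-t)^{|\mathrm{Des}(v)|},$$ where the sum is over all $x\in W$ with $x\le v$ and $\mu$ is the Möbius function of $(W,\le)$.
   Context: $(W,S)$ is a finitely generated Coxeter system with length function $\ell$ and identity $e$. For $w\in W$, $S(w)\subseteq S$ is the set of simple reflections appearing in a (any) reduced expression of $w$, and $\mathrm{Des}(w)=\{s\in S:\ell(ws)<\ell(w)\}$. For $I\subseteq S$, $W_I$ is the parabolic subgroup generated by $I$, $X_I=\{u\in W:\ell(us)>\ell(u)\ \forall s\in I\}$, and every $w\in W$ factors uniquely as $w=w^Iw_I$ with $w^I\in X_I$, $w_I\in W_I$ (parabolic components along $I$). The partial order on $W$: $u\le v$ iff $v_{S(u)}=u$ (so $e\le x$ for all $x$). *)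

(* Defs.v *)
From HB Require Import structures.
From mathcomp Require Import all_boot all_order all_algebra.
From mathcomp Require Import boolp.
Set Implicit Arguments. Unset Strict Implicit. Unset Printing Implicit Defensive.
Import GRing.Theory.

(* A finitely generated Coxeter system (W,S): a group W (possibly infinite)  *)
(* with a finite set S of generators (indexed by a finType), presented by    *)
(*   < S | (s t)^{m(s,t)} = e >,  m(s,t) = order of st in W (possibly oo).   *)
(* The presentation is expressed by its universal property: every map f of  *)
(* S into any group G satisfying the same relations ((st)^n = e in W ==>     *)
(* (f s f t)^n = e in G) extends to a group homomorphism W -> G.            *)

Fixpoint gpow (G : Type) (m : G -> G -> G) (u : G) (x : G) (n : nat) : G :=
  match n with 0 => u | n'.+1 => m x (gpow m u x n') end.

Definition is_group (G : Type) (m : G -> G -> G) (u : G) (i : G -> G) : Prop :=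
  [/\ forall x y z, m x (m y z) = m (m x y) z,
      forall x, m u x = x, forall x, m x u = x,
      forall x, m (i x) x = u & forall x, m x (i x) = u].

Record coxeter_system := CoxeterSystem {
  cW : eqType;
  cmul : cW -> cW -> cW;
  cone : cW;
  cinv : cW -> cW;
  cS : finType;
  cgen : cS -> cW;
  cW_group : is_group cmul cone cinv;
  cgen_inj : injective cgen;
  cgen_neq1 : forall s, cgen s <> cone;
  cgen_invol : forall s, cmul (cgen s) (cgen s) = cone;
  cgen_generates : forall w : cW, exists word : seq cS,
      w = foldr (fun s acc => cmul (cgen s) acc) cone word;
  cpresentation : forall (G : Type) (gm : G -> G -> G) (gu : G) (gi : G -> G),
      is_group gm gu gi -> forall f : cS -> G,
      (forall s t n, gpow cmul cone (cmul (cgen s) (cgen t)) n = cone ->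
                     gpow gm gu (gm (f s) (f t)) n = gu) ->
      exists h : cW -> G, (forall x y, h (cmul x y) = gm (h x) (h y)) /\
                          (forall s, h (cgen s) = f s)
}.

Section Coxeter.
Variable C : coxeter_system.
Local Notation W := (cW C).
Local Notation S := (cS C).
Local Notation "x * y" := (cmul x y).
Local Notation e := (cone C).
Local Notation gen := (cgen (c:=C)).

Definition wprod (word : seq S) : W := foldr (fun s acc => gen s * acc) e word.

Lemma length_ex (w : W) :
  exists n, `[< exists word, size word = n /\ wprod word = w >].
Proof.
have [word ->] := cgen_generates w.
by exists (size word); apply/asboolP; exists word.
Qed.

Definition length (w : W) : nat := ex_minn (length_ex w).

Definition reduced_word (word : seq S) (w : W) : Prop :=
  wprod word = w /\ size word = length w.

Definition supp (w : W) : {set S} :=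
  [set s | `[< exists word, reduced_word word w /\ s \in word >]].

Definition Des (w : W) : {set S} := [set s | length (w * gen s) < length w].

Definition in_parabolic (I : {set S}) (w : W) : Prop :=
  exists word : seq S, all (fun s => s \in I) word /\ wprod word = w.

Definition in_X (I : {set S}) (u : W) : Prop :=
  forall s, s \in I -> length u < length (u * gen s).

Definition par_comp (I : {set S}) (w : W) : W :=
  match pselect (exists b, in_parabolic I b /\ exists a, in_X I a /\ w = a * b)
  with
  | left H => proj1_sig (cid H)
  | right _ => e
  end.

Definition cox_le (u v : W) : Prop := par_comp (supp u) v = u.

Definition cox_interval (x y : W) : seq W :=
  match pselect (exists s : seq W, uniq s /\
                   forall z, z \in s = `[< cox_le x z /\ cox_le z y >])
  with
  | left H => proj1_sig (cid H)
  | right _ => [::]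
  end.

(* Moebius function of (W, <=):  mu(x,x) = 1,
   mu(x,y) = - sum_{x <= z < y} mu(x,z) for x < y,  mu(x,y) = 0 otherwise.
   Computed by recursion with fuel = size of the cox_interval. *)
Fixpoint mobius_fuel (n : nat) (x y : W) : int :=
  match n with
  | 0 => 0
  | n'.+1 =>
    if x == y then 1
    else if `[< cox_le x y >] then
      - \sum_(z <- cox_interval x y | z != y) mobius_fuel n' x z
    else 0
  end%R.

Definition mobius (x y : W) : int := mobius_fuel (size (cox_interval x y)).+1 x y.

End Coxeter.

(* Main.v *)
Require Import Defs.
From HB Require Import structures.
From mathcomp Require Import all_boot all_order all_algebra.
From mathcomp Require Import boolp.
Import GRing.Theory.
From mathcomp Require Import zify.

Module CoxDev.
Set Implicit Arguments. Unset Strict Implicit. Unset Printing Implicit Defensive.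

Section Cox.
Variable C : coxeter_system.
Local Notation W := (cW C).
Local Notation S := (cS C).
Local Notation "x ** y" := (@cmul C x y) (at level 40, left associativity).
Local Notation e := (cone C).
Local Notation inv := (@cinv C).
Local Notation gen := (@cgen C).

Lemma mulA (x y z : W) : x ** (y ** z) = x ** y ** z.
Proof. by case: (cW_group C). Qed.
Lemma mul1w (x : W) : e ** x = x.
Proof. by case: (cW_group C). Qed.
Lemma mulw1 (x : W) : x ** e = x.
Proof. by case: (cW_group C). Qed.
Lemma mulVw (x : W) : inv x ** x = e.
Proof. by case: (cW_group C). Qed.
Lemma mulwV (x : W) : x ** inv x = e.
Proof. by case: (cW_group C). Qed.

Lemma mulKw (x y : W) : inv x ** (x ** y) = y.
Proof. by rewrite mulA mulVw mul1w. Qed.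
Lemma mulKVw (x y : W) : x ** (inv x ** y) = y.
Proof. by rewrite mulA mulwV mul1w. Qed.
Lemma mulwK (x y : W) : x ** y ** inv y = x.
Proof. by rewrite -mulA mulwV mulw1. Qed.
Lemma mulwKV (x y : W) : x ** inv y ** y = x.
Proof. by rewrite -mulA mulVw mulw1. Qed.
Lemma mulwI (x y z : W) : x ** y = x ** z -> y = z.
Proof. by move=> h; rewrite -(mulKw x y) h mulKw. Qed.
Lemma mulIw (x y z : W) : y ** x = z ** x -> y = z.
Proof. by move=> h; rewrite -(mulwK y x) h mulwK. Qed.
Lemma inv_uniq (x y : W) : x ** y = e -> y = inv x.
Proof. by move=> h; apply: (@mulwI x); rewrite h mulwV. Qed.
Lemma invK (x : W) : inv (inv x) = x.
Proof. by symmetry; apply: inv_uniq; rewrite mulVw. Qed.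
Lemma invM (x y : W) : inv (x ** y) = inv y ** inv x.
Proof. by symmetry; apply: inv_uniq; rewrite mulA mulwK mulwV. Qed.
Lemma inv1 : inv e = e.
Proof. by symmetry; apply: inv_uniq; rewrite mul1w. Qed.
Lemma genV s : inv (gen s) = gen s.
Proof. by symmetry; apply: inv_uniq; rewrite cgen_invol. Qed.
Lemma genK s x : gen s ** (gen s ** x) = x.
Proof. by rewrite mulA cgen_invol mul1w. Qed.
Lemma genKr s x : x ** gen s ** gen s = x.
Proof. by rewrite -mulA cgen_invol mulw1. Qed.

Lemma wprod_cons s q : wprod (s :: q) = gen s ** wprod q.
Proof. by []. Qed.
Lemma wprod_nil : wprod [::] = e :> W.
Proof. by []. Qed.
Lemma wprod_cat (a b : seq S) : wprod (a ++ b) = wprod a ** wprod b.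
Proof. by elim: a => [|s a IH] /=; rewrite ?mul1w // IH mulA. Qed.
Lemma wprod_rcons (a : seq S) s : wprod (rcons a s) = wprod a ** gen s.
Proof. by rewrite -cats1 wprod_cat /= mulw1. Qed.
Lemma wprod_rev (a : seq S) : wprod (rev a) = inv (wprod a).
Proof.
elim: a => [|s a IH]; first by rewrite /= inv1.
by rewrite rev_cons wprod_rcons IH wprod_cons invM genV.
Qed.

Lemma length_le (q : seq S) : length (wprod q) <= size q.
Proof.
rewrite /length; case: ex_minnP => m _; apply.
by apply/asboolP; exists q.
Qed.

Lemma length_word (w : W) : exists q : seq S, size q = length w /\ wprod q = w.
Proof.
rewrite /length; case: ex_minnP => m /asboolP [q [hs hw]] _.
by exists q.
Qed.

Lemma length_min (w : W) (q : seq S) : wprod q = w -> length w <= size q.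
Proof. by move=> <-; apply: length_le. Qed.

Lemma length1 : length e = 0.
Proof. by apply/eqP; rewrite -leqn0 (length_min (q:=[::])). Qed.

Lemma length0 (w : W) : length w = 0 -> w = e.
Proof.
move=> h; have [q [hs hw]] := length_word w.
by move: hs; rewrite h => /size0nil hq; rewrite -hw hq.
Qed.

Lemma length_mul (x y : W) : length (x ** y) <= length x + length y.
Proof.
have [q [hq hx]] := length_word x; have [r [hr hy]] := length_word y.
by rewrite -hq -hr -size_cat -hx -hy -wprod_cat length_le.
Qed.

Lemma length_inv (w : W) : length (inv w) = length w.
Proof.
suff H : forall x : W, length (inv x) <= length x.
  by apply/eqP; rewrite eqn_leq; apply/andP; split; [apply: H|rewrite -{1}(invK w); apply: H].
move=> x; have [q [hq hx]] := length_word x.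
by rewrite -hq -(size_rev q) -hx -wprod_rev length_le.
Qed.

Lemma length_gen s : length (gen s) = 1.
Proof.
apply/eqP; rewrite eqn_leq (length_min (q := [:: s])) /= ?mulw1 //.
rewrite lt0n; apply/eqP => /length0; exact: cgen_neq1.
Qed.

Lemma length_mulg (w : W) s : length (w ** gen s) <= (length w).+1.
Proof. by rewrite -addn1 -(length_gen s) length_mul. Qed.

Lemma length_mulg' (w : W) s : length w <= (length (w ** gen s)).+1.
Proof. by rewrite -{1}(genKr s w) length_mulg. Qed.


Lemma parity_hom : exists h : W -> bool,
  (forall x y, h (x ** y) = h x (+) h y) /\ (forall s, h (gen s) = true).
Proof.
have G : is_group addb false id.
  by split=> [x y z|x|x|x|x]; rewrite ?addbA ?addbb ?addbF.
have rel : forall (s t : S) n, gpow (@cmul C) e (gen s ** gen t) n = e ->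
    gpow addb false ((fun _ => true) s (+) (fun _ => true) t) n = false.
  by move=> s t n _; elim: n => //= n ->.
have [h [hM hg]] := @cpresentation C _ _ _ _ G (fun _ => true) rel.
by exists h.
Qed.

Lemma length_parity s (w : W) :
  length (w ** gen s) = (length w).+1 \/ length w = (length (w ** gen s)).+1.
Proof.
have [h [hM hg]] := parity_hom.
have h1 : h e = false.
  by have := hM e e; rewrite mul1w; case: (h e).
have hw : forall q, h (wprod q) = odd (size q).
  by elim=> [|a q IH] //=; rewrite hM hg IH.
have hl : forall x, h x = odd (length x).
  move=> x; have [q [hq hx]] := length_word x.
  by rewrite -hq -hx hw.
have := hM w (gen s); rewrite hg !hl.
have := length_mulg w s; have := length_mulg' w s.
move: (length w) (length (w ** gen s)) => a b h2 h3 hp.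
have : a != b by apply/eqP=> ab; move: hp; rewrite ab; case: (odd b).
rewrite neq_ltn => /orP [ab|ba]; [left|right]; apply/eqP; rewrite eqn_leq.
  by rewrite h3 ab.
by rewrite h2 ba.
Qed.

Definition conj (p y : W) := inv p ** y ** p.

Fixpoint rts (q : seq S) : seq W :=
  if q is s :: b then conj (wprod b) (gen s) :: rts b else [::].

Definition GT := (W * (W -> bool))%type.
Definition gmul (a b : GT) : GT :=
  (a.1 ** b.1, fun t => b.2 t (+) a.2 (b.1 ** t ** inv b.1)).
Definition gone : GT := (e, fun _ => false).
Definition ginv (a : GT) : GT := (inv a.1, fun t => a.2 (inv a.1 ** t ** a.1)).

Lemma GT_group : is_group gmul gone ginv.
Proof.
split.
- move=> [x f] [y g] [z h]; rewrite /gmul /=; congr pair; first exact: mulA.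
  apply: funext => t; rewrite addbA; congr (_ (+) f _).
  by rewrite invM !mulA.
- move=> [x f]; rewrite /gmul /=; congr pair; first exact: mul1w.
  by apply: funext => t; rewrite addbF.
- move=> [x f]; rewrite /gmul /=; congr pair; first exact: mulw1.
  by apply: funext => t; rewrite inv1 mulw1 mul1w.
- move=> [x f]; rewrite /gmul /=; congr pair; first exact: mulVw.
  by apply: funext => t; rewrite !mulA mulVw mul1w mulwKV addbb.
- move=> [x f]; rewrite /gmul /=; congr pair; first exact: mulwV.
  by apply: funext => t; rewrite invK addbb.
Qed.

Definition oddc (l : seq W) (t : W) := odd (count (pred1 t) l).
Definition Fw (q : seq S) : GT := (wprod q, oddc (rts q)).
Definition fgen (s : S) : GT := (gen s, fun t => t == gen s).

Lemma conj_eq (p t y : W) : (t == conj p y) = (p ** t ** inv p == y).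
Proof.
apply/eqP/eqP => [->|<-]; rewrite /conj.
  by rewrite !mulA mulwV mul1w mulwK.
by rewrite !mulA mulVw mul1w mulwKV.
Qed.

Lemma Fw_cons s q : Fw (s :: q) = gmul (fgen s) (Fw q).
Proof.
rewrite /Fw /gmul /=; congr pair; apply: funext => t.
by rewrite /oddc /= oddD oddb addbC eq_sym conj_eq.
Qed.

Lemma gmul1 a : gmul a gone = a.
Proof. by case: GT_group => _ _ h _ _; apply: h. Qed.
Lemma gmulA a b c : gmul a (gmul b c) = gmul (gmul a b) c.
Proof. by case: GT_group => h _ _ _ _; apply: h. Qed.

Lemma Fw_cat a b : Fw (a ++ b) = gmul (Fw a) (Fw b).
Proof.
elim: a => [|s a IH] /=.
  by case: GT_group => _ h _ _ _; rewrite h.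
by rewrite Fw_cons IH gmulA Fw_cons.
Qed.

Definition pw (x : W) n := gpow (@cmul C) e x n.

Lemma pwS x n : pw x n.+1 = x ** pw x n.
Proof. by []. Qed.
Lemma pwD x n m : pw x (n + m) = pw x n ** pw x m.
Proof. by elim: n => [|n IH]; rewrite ?mul1w // addSn !pwS IH mulA. Qed.
Lemma pwV x n : inv (pw x n) = pw (inv x) n.
Proof.
elim: n => [|n IH]; first by rewrite /= inv1.
by rewrite pwS invM IH -(addn1 n) pwD /pw /= mulw1.
Qed.

Definition uword (s t : S) n := flatten (nseq n [:: s; t]).

Lemma wprod_uword s t n : wprod (uword s t n) = pw (gen s ** gen t) n.
Proof.
elim: n => [|n IH] //=; rewrite pwS -IH /uword /= mulA; done.
Qed.

Lemma rts_uword s t n :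
  rts (uword s t n) =
  [seq pw (inv (gen s ** gen t)) k ** gen t | k <- rev (iota 0 (n.*2))].
Proof.
set x := gen s ** gen t.
have tx1 : gen t ** x = inv x ** gen t by rewrite /x invM !genV mulA.
have tx : forall m, gen t ** pw x m = pw (inv x) m ** gen t.
  elim=> [|m IH]; first by rewrite /= mul1w mulw1.
  by rewrite !pwS mulA tx1 -mulA IH mulA.
elim: n => [|n IH] //.
have -> : uword s t n.+1 = s :: t :: uword s t n by [].
rewrite [LHS]/= IH wprod_uword -/x.
have -> : rev (iota 0 (n.+1).*2) = (n.*2).+1 :: n.*2 :: rev (iota 0 n.*2).
  by rewrite doubleS -addn2 iotaD rev_cat add0n.
rewrite map_cons map_cons.
have ixE : inv x = gen t ** gen s by rewrite /x invM !genV.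
congr (_ :: _ :: _).
- rewrite /conj invM pwV genV -mulA tx -addnn -addnS pwD pwS ixE.
  by rewrite !mulA.
- by rewrite /conj pwV -mulA tx mulA -pwD addnn.
Qed.

Lemma oddc_uword s t n : pw (gen s ** gen t) n = e ->
  forall y, oddc (rts (uword s t n)) y = false.
Proof.
move=> hn y; rewrite /oddc rts_uword count_map count_rev -addnn iotaD count_cat.
have -> : iota (0 + n) n = map (addn n) (iota 0 n) by rewrite -iotaDl addn0.
rewrite count_map.
rewrite (eq_count (a2 := preim (fun k => pw (inv (gen s ** gen t)) k ** gen t) (pred1 y))).
  by rewrite oddD addbb.
by move=> k /=; rewrite pwD -pwV hn inv1 mul1w.
Qed.

Lemma rts_invariant (q q' : seq S) : wprod q = wprod q' -> oddc (rts q) =1 oddc (rts q').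
Proof.
have rel : forall (s t : S) n, gpow (@cmul C) e (gen s ** gen t) n = e ->
    gpow gmul gone (gmul (fgen s) (fgen t)) n = gone.
  move=> s t n hn.
  have -> : gmul (fgen s) (fgen t) = Fw [:: s; t] by rewrite Fw_cons Fw_cons /= gmul1.
  have -> : gpow gmul gone (Fw [:: s; t]) n = Fw (uword s t n).
    elim: n {hn} => [|n IH].
      by rewrite /= /Fw /gone; congr pair; apply: funext.
    by rewrite /= IH /uword /= -Fw_cat.
  rewrite /Fw wprod_uword; congr pair; first exact: hn.
  by apply: funext => y; rewrite oddc_uword.
have [h [hM hg]] := @cpresentation C _ _ _ _ GT_group fgen rel.
have h1 : h e = gone.
  have := hM e e; rewrite mul1w => H.
  have := congr1 (gmul (ginv (h e))) H.
  by case: GT_group => hA _ _ hV _; rewrite hA hV; case: GT_group => _ hl _ _ _; rewrite hl.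
have hw : forall r, h (wprod r) = Fw r.
  by elim=> [|a r IH] //=; rewrite hM hg IH Fw_cons.
move=> E y; have := congr1 h E; rewrite !hw /Fw => [[_]] -> //.
Qed.

Definition reduced (q : seq S) := size q = length (wprod q).

Lemma reduced_cat (a b : seq S) : reduced (a ++ b) -> reduced a /\ reduced b.
Proof.
rewrite /reduced wprod_cat size_cat => h.
have h1 := length_mul (wprod a) (wprod b).
have ha := length_le a; have hb := length_le b.
split; apply/eqP; rewrite eqn_leq; apply/andP; split => //.
- by rewrite -(leq_add2r (size b)) h (leq_trans h1) // leq_add2l.
- by rewrite -(leq_add2l (size a)) h (leq_trans h1) // leq_add2r.
Qed.

Lemma conj_gen_invol (p : W) s : conj p (gen s) ** conj p (gen s) = e.
Proof. by rewrite /conj !mulA mulwK genKr mulVw. Qed.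

Lemma del_lemma (b1 b2 : seq S) s :
  wprod (b1 ++ s :: b2) ** conj (wprod b2) (gen s) = wprod (b1 ++ b2).
Proof.
by rewrite !wprod_cat wprod_cons /conj -!mulA mulKVw genK.
Qed.

Lemma rts_mem (b : seq S) t : t \in rts b ->
  exists b1 s b2, b = b1 ++ s :: b2 /\ t = conj (wprod b2) (gen s).
Proof.
elim: b => [|s b IH] //=; rewrite in_cons => /orP [/eqP ->|/IH [b1 [s' [b2 [-> ->]]]]].
  by exists [::], s, b.
by exists (s :: b1), s', b2.
Qed.

Lemma rts_uniq (q : seq S) : reduced q -> uniq (rts q).
Proof.
elim: q => [|s b IH] //= hr.
have [_ hb] := reduced_cat (a := [:: s]) hr.
rewrite IH // andbT; apply/negP => /rts_mem [b1 [s' [b2 [hb12 ht]]]].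
set w := wprod (s :: b).
have h1 : w ** conj (wprod b) (gen s) = wprod b.
  by rewrite /w wprod_cons /conj !mulA mulwK cgen_invol mul1w.
have h2 : w = wprod (b1 ++ b2).
  rewrite -(del_lemma b1 b2 s') -hb12 -ht.
  transitivity (w ** conj (wprod b) (gen s) ** conj (wprod b) (gen s)).
    by rewrite -mulA conj_gen_invol mulw1.
  by rewrite h1.
have := length_le (b1 ++ b2); rewrite -h2 /w -hr /= hb12 !size_cat /= addnS.
by rewrite ltnNge leqnSn.
Qed.

Lemma mem_rts_rcons (r : seq S) s : gen s \in rts (rcons r s).
Proof.
elim: r => [|a r IH] /=; last by rewrite in_cons IH orbT.
by rewrite /conj inv1 mul1w mulw1 mem_seq1.
Qed.

Lemma exchange (w : W) s (q : seq S) :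
  length (w ** gen s) < length w -> reduced q -> wprod q = w ->
  exists b1 s' b2, q = b1 ++ s' :: b2 /\ w ** gen s = wprod (b1 ++ b2).
Proof.
move=> hlt hq hw.
have [r [hr hrw]] := length_word (w ** gen s).
have hl : length w = (length (w ** gen s)).+1.
  by case: (length_parity s w) => // h; move: hlt; rewrite h ltnNge leqnSn.
have hred : reduced (rcons r s).
  by rewrite /reduced wprod_rcons hrw genKr size_rcons hr hl.
have hodd : oddc (rts q) (gen s).
  rewrite (rts_invariant (q' := rcons r s)); last by rewrite hw wprod_rcons hrw genKr.
  by rewrite /oddc (count_uniq_mem _ (rts_uniq hred)) mem_rts_rcons.
have : gen s \in rts q.
  by rewrite -has_pred1 has_count lt0n; apply/negP => /eqP h; move: hodd; rewrite /oddc h.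
move=> /rts_mem [b1 [s' [b2 [hq' hc]]]].
exists b1, s', b2; split => //.
by rewrite -(del_lemma b1 b2 s') -hq' hw hc.
Qed.

Lemma reduced_subword (q : seq S) :
  exists r, subseq r q /\ reduced r /\ wprod r = wprod q.
Proof.
elim/last_ind: q => [|q s [r [hs [hr hw]]]]; first by exists [::]; split => //; split => //; rewrite /reduced /= length1.
case: (length_parity s (wprod r)) => hl.
  exists (rcons r s); split; first by rewrite -!cats1 cat_subseq.
  by rewrite /reduced !wprod_rcons hl size_rcons hr hw.
have [b1 [s' [b2 [hr' hw']]]] := exchange (w := wprod r) (s := s) (ltac:(by rewrite hl)) hr erefl.
exists (b1 ++ b2); split.
  apply: (subseq_trans _ (subseq_rcons q s)); apply: subseq_trans hs.
  by rewrite hr' cat_subseq // subseq_cons.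
split; last by rewrite -hw' hw wprod_rcons.
move: hr; rewrite /reduced hl {1}hr' size_cat /= addnS => [[h]].
by rewrite size_cat h hw'.
Qed.


Lemma in_par_word (I : {set S}) q : all (mem I) q -> in_parabolic I (wprod q).
Proof. by move=> h; exists q. Qed.

Lemma in_par1 (I : {set S}) : in_parabolic I e.
Proof. by exists [::]. Qed.

Lemma in_par_gen (I : {set S}) s : s \in I -> in_parabolic I (gen s).
Proof. by move=> h; exists [:: s]; rewrite /= h mulw1. Qed.

Lemma in_parM (I : {set S}) x y :
  in_parabolic I x -> in_parabolic I y -> in_parabolic I (x ** y).
Proof.
move=> [q [hq <-]] [r [hr <-]]; exists (q ++ r); rewrite all_cat hq hr.
by rewrite wprod_cat.
Qed.

Lemma in_parV (I : {set S}) x : in_parabolic I x -> in_parabolic I (inv x).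
Proof. by move=> [q [hq <-]]; exists (rev q); rewrite all_rev hq wprod_rev. Qed.

Lemma in_par_sub (I J : {set S}) x : I \subset J -> in_parabolic I x -> in_parabolic J x.
Proof.
move=> /subsetP hIJ [q [hq <-]]; exists q; split => //.
by apply/allP => s /(allP hq) /hIJ.
Qed.

Lemma in_par_red (I : {set S}) x : in_parabolic I x ->
  exists q, [/\ all (mem I) q, reduced q & wprod q = x].
Proof.
move=> [q [hq <-]]; have [r [hs [hr hw]]] := reduced_subword q.
exists r; split => //; apply/allP => s /(mem_subseq hs) hsq.
exact: (allP hq).
Qed.

Lemma reduced_word_ex (w : W) : exists q, reduced q /\ wprod q = w.
Proof. by have [q [hs hw]] := length_word w; exists q; rewrite /reduced hw. Qed.

Definition minrep (I : {set S}) (a : W) :=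
  forall c, in_parabolic I c -> length a <= length (a ** c).

Lemma minrep_ex (I : {set S}) (w : W) :
  exists c, in_parabolic I c /\ minrep I (w ** c).
Proof.
have hex : exists n, `[< exists c, in_parabolic I c /\ length (w ** c) = n >].
  by exists (length (w ** e)); apply/asboolP; exists e; split => //; apply: in_par1.
case: (ex_minnP hex) => m /asboolP [c [hc hm]] hmin.
exists c; split => // d hd; rewrite hm; apply: hmin; apply/asboolP.
by exists (c ** d); split; [apply: in_parM|rewrite mulA].
Qed.

Lemma cat_split (ra q' b1 b2 : seq S) s :
  ra ++ q' = b1 ++ s :: b2 ->
  (exists x, ra = b1 ++ s :: x /\ b2 = x ++ q') \/
  (exists y, b1 = ra ++ y /\ q' = y ++ s :: b2).
Proof.
elim: ra b1 => [|a ra IH] b1 /=.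
  by move=> ->; right; exists b1.
case: b1 => [|c b1] /= [-> h].
  by left; exists ra.
case: (IH _ h) => [[x [-> ->]]|[y [-> ->]]]; [left; exists x|right; exists y]; by [].
Qed.

Lemma minrep_add (I : {set S}) (a : W) (q : seq S) :
  minrep I a -> all (mem I) q -> reduced q ->
  length (a ** wprod q) = length a + size q.
Proof.
move=> ha; elim/last_ind: q => [|q s IH]; first by rewrite /= mulw1 addn0.
rewrite all_rcons => /andP [hs hq] hr.
have [hr' _] := reduced_cat (a := q) (b := [:: s]) (ltac:(by rewrite cats1)).
have IH' := IH hq hr'.
rewrite wprod_rcons mulA size_rcons addnS.
case: (length_parity s (a ** wprod q)) => hl; first by rewrite hl IH'.
exfalso.
have [ra [hra hraw]] := reduced_word_ex a.
have hred : reduced (ra ++ q).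
  by rewrite /reduced wprod_cat hraw IH' size_cat hra hraw.
have [b1 [s' [b2 [hsp hw']]]] := exchange (w := a ** wprod q) (s := s)
  (ltac:(by rewrite hl)) hred (ltac:(by rewrite wprod_cat hraw)).
case: (cat_split hsp) => [[x [hx hb2]]|[y [hy hq']]].
-
  set c := wprod q ** gen s ** inv (wprod q).
  have hc : in_parabolic I c.
    by apply: in_parM; [apply: in_parM; [apply: in_par_word|apply: in_par_gen]|apply: in_parV; apply: in_par_word].
  have := ha c hc.
  have -> : a ** c = wprod (b1 ++ x).
    apply: (@mulIw (wprod q)).
    by rewrite /c !mulA mulwKV hw' hb2 catA wprod_cat.
  have := length_le (b1 ++ x); rewrite -hraw -hra hx !size_cat /= addnS.
  move=> h1 h2; have := leq_trans h2 h1; by rewrite ltnn.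
-
  have : wprod q ** gen s = wprod (y ++ b2).
    apply: (@mulwI a); rewrite mulA hw' hy -catA wprod_cat hraw wprod_cat; done.
  move=> hh; have := length_le (y ++ b2); rewrite -hh.
  move: hr; rewrite /reduced wprod_rcons size_rcons hq' size_cat /= => <-.
  by rewrite size_cat addnS => /ltnW; rewrite ltnn.
Qed.

Lemma minrep_lenadd (I : {set S}) a b : minrep I a -> in_parabolic I b ->
  length (a ** b) = length a + length b.
Proof.
move=> ha /in_par_red [q [hq hr <-]].
by rewrite (minrep_add ha hq hr) hr.
Qed.

Lemma minrep_X (I : {set S}) a : minrep I a -> in_X I a.
Proof.
move=> ha s hs; have := ha _ (in_par_gen hs).
case: (length_parity s a) => -> => [_|]; [exact: ltnSn|by rewrite ltnn].
Qed.

Lemma X_minrep (I : {set S}) a : in_X I a -> minrep I a.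
Proof.
move=> ha; have [c [hc hm]] := minrep_ex I a.
have hd : in_parabolic I (inv c) by apply: in_parV.
have ea : a = a ** c ** inv c by rewrite mulwK.
have hl := minrep_lenadd hm hd; rewrite -ea in hl.
have [q [hq hr hw]] := in_par_red hd.
case/lastP: q hq hr hw => [|q s] hq hr hw.
  by move: ea; rewrite -hw /= mulw1 => ea; rewrite ea.
exfalso.
move: hq; rewrite all_rcons => /andP [hs hq].
have [hr' _] := reduced_cat (a := q) (b := [:: s]) (ltac:(by rewrite cats1)).
have := ha s hs.
have -> : a ** gen s = a ** c ** wprod q.
  by rewrite {1}ea -hw wprod_rcons mulA genKr.
rewrite (minrep_add hm hq hr') hl -hw -hr size_rcons addnS.
by rewrite ltnNge leqnSn.
Qed.

Lemma decomp_ex (I : {set S}) w :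
  exists a b, [/\ in_X I a, in_parabolic I b & w = a ** b].
Proof.
have [c [hc hm]] := minrep_ex I w.
exists (w ** c), (inv c); split; [exact: minrep_X|exact: in_parV|by rewrite mulwK].
Qed.

Lemma decomp_uniq (I : {set S}) a b a' b' :
  in_X I a -> in_parabolic I b -> in_X I a' -> in_parabolic I b' ->
  a ** b = a' ** b' -> b = b'.
Proof.
move=> /X_minrep ha hb /X_minrep ha' hb' E.
have e1 : a' = a ** (b ** inv b') by rewrite mulA E mulwK.
have e2 : a = a' ** (b' ** inv b) by rewrite mulA -E mulwK.
have l1 := minrep_lenadd ha (in_parM hb (in_parV hb')).
have l2 := minrep_lenadd ha' (in_parM hb' (in_parV hb)).
rewrite -e1 in l1; rewrite -e2 in l2.
have : length (b ** inv b') = 0.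
  by move: l1; rewrite l2; lia.
move/length0 => h; apply: (@mulIw (inv b')); by rewrite h mulwV.
Qed.

Lemma par_compE (I : {set S}) w a b :
  in_X I a -> in_parabolic I b -> w = a ** b -> par_comp I w = b.
Proof.
move=> ha hb hw; rewrite /par_comp; case: pselect => [H|H].
  case: (cid H) => b' [hb' [a' [ha' hw']]] /=.
  by apply: (decomp_uniq ha' hb' ha hb); rewrite -hw' -hw.
by exfalso; apply: H; exists b; split => //; exists a.
Qed.

Lemma par_comp_spec (I : {set S}) w :
  in_parabolic I (par_comp I w) /\ exists a, in_X I a /\ w = a ** par_comp I w.
Proof.
have [a [b [ha hb hw]]] := decomp_ex I w.
by rewrite (par_compE ha hb hw); split => //; exists a.
Qed.

Lemma X_lenadd (I : {set S}) a b : in_X I a -> in_parabolic I b ->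
  length (a ** b) = length a + length b.
Proof. by move=> /X_minrep; apply: minrep_lenadd. Qed.


Lemma in_supp s (w : W) q : reduced q -> wprod q = w -> s \in q -> s \in supp w.
Proof.
move=> hr hw hs; rewrite inE; apply/asboolP; exists q; split => //.
by split => //; rewrite hr hw.
Qed.

Lemma supp_word (w : W) :
  exists q, [/\ reduced q, wprod q = w & all (mem (supp w)) q].
Proof.
have [q [hr hw]] := reduced_word_ex w.
by exists q; split => //; apply/allP => s; apply: in_supp.
Qed.

Lemma in_par_supp (w : W) : in_parabolic (supp w) w.
Proof. by have [q [_ hw hq]] := supp_word w; exists q. Qed.

Lemma gen_in_par (I : {set S}) s : in_parabolic I (gen s) -> s \in I.
Proof.
move=> /in_par_red [q [hq hr hw]].
move: hr; rewrite /reduced hw length_gen.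
case: q hq hw => [|s' [|]] //= /andP [hs' _] hw _.
by move: hw; rewrite mulw1 => /cgen_inj <-.
Qed.

Lemma reduced_in_par (I : {set S}) q :
  reduced q -> in_parabolic I (wprod q) -> all (mem I) q.
Proof.
elim/last_ind: q => [|q s IH] // hr hp.
have [hr' _] := reduced_cat (a := q) (b := [:: s]) (ltac:(by rewrite cats1)).
rewrite all_rcons; case hs: (s \in I); [apply/andP; split => //|].
  apply: IH => //; have -> : wprod q = wprod (rcons q s) ** gen s.
    by rewrite wprod_rcons genKr.
  by apply: in_parM => //; apply: in_par_gen.
exfalso; move: hs => /negP; apply.
set w := wprod (rcons q s).
have hlt : length (w ** gen s) < length w.
  rewrite /w -hr wprod_rcons genKr size_rcons ltnS; exact: length_le.
have [p [hp1 hp2 hp3]] := in_par_red hp.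
have [b1 [s' [b2 [hsp hw']]]] := exchange hlt hp2 hp3.
apply: gen_in_par.
have -> : gen s = inv w ** (w ** gen s) by rewrite mulKw.
apply: in_parM; first by apply: in_parV.
rewrite hw'; apply: in_par_word; move: hp1; rewrite hsp !all_cat /= => /and3P [-> _ ->] //.
Qed.

Lemma supp_sub (I : {set S}) (w : W) : in_parabolic I w -> supp w \subset I.
Proof.
move=> hp; apply/subsetP => s; rewrite inE => /asboolP [q [[hw hs] hin]].
have hr : reduced q by rewrite /reduced hw hs.
by have := reduced_in_par (I := I) hr (ltac:(by rewrite hw)) => /allP /(_ s hin).
Qed.

Lemma supp_sub_iff (I : {set S}) (w : W) : supp w \subset I <-> in_parabolic I w.
Proof.
split; last exact: supp_sub.
by move=> h; apply: in_par_sub h (in_par_supp w).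
Qed.

Lemma supp1 : supp e = set0.
Proof.
apply/eqP; rewrite -subset0; apply: supp_sub; exact: in_par1.
Qed.

Lemma supp_par_comp (K : {set S}) (w : W) : supp (par_comp K w) \subset supp w.
Proof.
have [hb [a [ha hw]]] := par_comp_spec K w.
apply/subsetP => s; rewrite inE => /asboolP [q [[hqw hqs] hin]].
have [ra [hra hraw]] := reduced_word_ex a.
apply: (@in_supp _ _ (ra ++ q)); last by rewrite mem_cat hin orbT.
  rewrite /reduced wprod_cat hraw hqw -hw size_cat hqs {2}hw (X_lenadd ha hb).
  by rewrite hra hraw.
by rewrite wprod_cat hraw hqw.
Qed.

Lemma supp_par_compK (K : {set S}) (w : W) : supp (par_comp K w) \subset K.
Proof. by apply: supp_sub; case: (par_comp_spec K w). Qed.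


Lemma par_comp_sub (K J : {set S}) (w : W) : K \subset J ->
  par_comp K (par_comp J w) = par_comp K w.
Proof.
move=> hKJ.
have [hb [a [ha hw]]] := par_comp_spec J w.
set b := par_comp J w in hb hw *.
have [hb' [a' [ha' hb2]]] := par_comp_spec K b.
set b' := par_comp K b in hb' hb2 *.
have ha'J : in_parabolic J a'.
  have -> : a' = b ** inv b' by rewrite {1}hb2 mulwK.
  by apply: in_parM => //; apply: in_parV; apply: in_par_sub hb'.
symmetry; apply: (par_compE (a := a ** a')) => //; last by rewrite -mulA -hb2.
move=> s hs; have hsJ : s \in J by apply: (subsetP hKJ).
rewrite (X_lenadd ha ha'J) -mulA (X_lenadd ha (in_parM ha'J (in_par_gen hsJ))).
by rewrite ltn_add2l; apply: ha'.
Qed.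

Lemma par_comp0 (w : W) : par_comp set0 w = e.
Proof.
apply: (par_compE (a := w)); [by move=> s; rewrite inE|exact: in_par1|by rewrite mulw1].
Qed.

Lemma le_e (z : W) : cox_le e z.
Proof. by rewrite /cox_le supp1 par_comp0. Qed.

Lemma le_trans_v (v x z : W) : cox_le x v -> cox_le z x ->
  cox_le z v /\ supp z \subset supp x.
Proof.
rewrite /cox_le => hx hz.
have hsub : supp z \subset supp x by rewrite -{1}hz supp_par_comp.
by split => //; rewrite -(par_comp_sub _ hsub) hx hz.
Qed.

Lemma le_of_v (v x z : W) : cox_le x v -> cox_le z v -> supp z \subset supp x ->
  cox_le z x.
Proof.
by rewrite /cox_le => hx hz hsub; rewrite -{1}hx (par_comp_sub _ hsub) hz.
Qed.

Lemma le_inj (v x z : W) : cox_le x v -> cox_le z v -> supp x = supp z -> x = z.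
Proof. by rewrite /cox_le => hx hz E; rewrite -hx -hz E. Qed.

Definition opn (v : W) (K : {set S}) := supp (par_comp K v) == K.

Lemma opn_le (v : W) (K : {set S}) : opn v K -> cox_le (par_comp K v) v.
Proof. by rewrite /opn /cox_le => /eqP ->. Qed.

Lemma le_Des (v x : W) : cox_le x v -> x != e ->
  exists s, s \in supp x /\ s \in Des v.
Proof.
move=> hx hne.
have [q [hr hw hall]] := supp_word x.
case/lastP: q hr hw hall => [|q s] hr hw hall; first by move: hne; rewrite -hw eqxx.
exists s; split; first by apply: (in_supp hr hw); rewrite mem_rcons mem_head.
have [_ [a [ha hv]]] := par_comp_spec (supp x) v.
rewrite hx in hv.
move: hall; rewrite all_rcons => /andP [_ hq].
have [hr' _] := reduced_cat (a := q) (b := [:: s]) (ltac:(by rewrite cats1)).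
rewrite inE hv (X_lenadd ha (in_par_supp x)) -mulA.
have -> : x ** gen s = wprod q by rewrite -hw wprod_rcons genKr.
rewrite (X_lenadd ha (in_par_word hq)) ltn_add2l -hr' -hw -hr size_rcons.
exact: ltnSn.
Qed.

Lemma Des_opn (v : W) (K : {set S}) : K \subset Des v -> opn v K.
Proof.
move=> hK; rewrite /opn eqEsubset supp_par_compK /=.
apply/subsetP => s hs.
have [hb [a [ha hv]]] := par_comp_spec K v.
set b := par_comp K v in hb hv *; clearbody b.
have := subsetP hK s hs; rewrite inE hv -mulA.
rewrite (X_lenadd ha hb) (X_lenadd ha (in_parM hb (in_par_gen hs))) ltn_add2l => hlt.
have hl : length b = (length (b ** gen s)).+1.
  by case: (length_parity s b) => // h; move: hlt; rewrite h ltnNge leqnSn.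
have [r [hr hrw]] := reduced_word_ex (b ** gen s).
apply: (@in_supp _ _ (rcons r s)).
- by rewrite /reduced wprod_rcons hrw genKr size_rcons hr hrw hl.
- by rewrite wprod_rcons hrw genKr.
- by rewrite mem_rcons mem_head.
Qed.

Lemma interval_ok (y : W) : exists s : seq W, uniq s /\
  forall z, z \in s = `[< cox_le e z /\ cox_le z y >].
Proof.
exists (undup [seq z <- [seq par_comp K y | K <- enum {set S}] | `[< cox_le z y >]]).
split; first exact: undup_uniq.
move=> z; rewrite mem_undup mem_filter.
have -> : `[< cox_le e z /\ cox_le z y >] = `[< cox_le z y >].
  by apply: asbool_equiv_eq; split => [[]|]; [|split => //; apply: le_e].
case: (boolP `[< cox_le z y >]) => //= /asboolP hz.
by apply/mapP; exists (supp z); rewrite ?mem_enum.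
Qed.

Lemma mem_interval (y z : W) : (z \in cox_interval e y) = `[< cox_le z y >].
Proof.
rewrite /cox_interval; case: pselect => [H|H]; last first.
  by exfalso; apply: H; apply: interval_ok.
case: (cid H) => s [_ hs] /=; rewrite hs.
by apply: asbool_equiv_eq; split => [[]|]; [|split => //; apply: le_e].
Qed.

Lemma uniq_interval (y : W) : uniq (cox_interval e y).
Proof.
rewrite /cox_interval; case: pselect => [H|H] //.
by case: (cid H) => s hs /=; case: hs.
Qed.

End Cox.

Import GRing.Theory.
Local Open Scope ring_scope.

Lemma sum_subsets (R : comRingType) (T : finType) (A : {set T}) (a : R) :
  \sum_(K : {set T} | K \subset A) a ^+ #|K| = (1 + a) ^+ #|A|.
Proof.
have -> : (1 + a) ^+ #|A| = \prod_(i : T) ((if i \in A then a else 0) + 1).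
  rewrite (eq_bigr (fun i => if i \in A then 1 + a else 1)); last first.
    by move=> i _; case: (i \in A); rewrite ?add0r // addrC.
  by rewrite -big_mkcond prodr_const.
rewrite bigA_distr big_mkcond /=; apply: eq_bigr => K _.
rewrite -big_mkcond /=.
case: (boolP (K \subset A)) => hK.
  rewrite (eq_bigr (fun _ => a)) ?prodr_const // => i hi.
  by rewrite (subsetP hK i hi).
have [i hiK hiA] : exists2 i, i \in K & i \notin A.
  by move/subsetPn: hK => [i h1 h2]; exists i.
by rewrite (bigD1 i) //= (negbTE hiA) mul0r.
Qed.

Section Mob.
Variable C : coxeter_system.
Local Notation W := (cW C).
Local Notation S := (cS C).
Local Notation e := (cone C).

Lemma sum_reindex (R : zmodType) (v : W) (U : {set S}) (s : seq W)
  (G : {set S} -> R) : uniq s ->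
  (forall z, z \in s = `[< cox_le z v >] && (supp z \subset U)) ->
  \sum_(z <- s) G (supp z) = \sum_(K : {set S} | (K \subset U) && opn v K) G K.
Proof.
move=> hu hs.
rewrite -(big_map (@supp C) xpredT G) -[in RHS]big_filter.
apply: perm_big; apply: uniq_perm.
- rewrite map_inj_in_uniq // => x y; rewrite !hs => /andP [/asboolP hx _] /andP [/asboolP hy _].
  exact: le_inj hx hy.
- by rewrite filter_uniq // index_enum_uniq.
move=> K; rewrite mem_filter mem_index_enum andbT.
apply/mapP/idP => [[z hz ->]|/andP [hK hop]].
  move: hz; rewrite hs => /andP [/asboolP hz hzU].
  by rewrite hzU /opn hz eqxx.
exists (par_comp K v); last by rewrite (eqP hop).
by rewrite hs (eqP hop) hK andbT; apply/asboolP; apply: opn_le.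
Qed.

Definition muK (v : W) (K : {set S}) : int :=
  if K \subset Des v then (-1) ^+ #|K| else 0.

Lemma sum_opn (R : zmodType) (v : W) (U : {set S}) (h : {set S} -> R) :
  \sum_(K : {set S} | (K \subset U) && opn v K) (if K \subset Des v then h K else 0)
  = \sum_(K : {set S} | K \subset U :&: Des v) h K.
Proof.
rewrite big_mkcond [RHS]big_mkcond; apply: eq_bigr => K _.
rewrite subsetI; case: (boolP (K \subset Des v)) => hD; last by rewrite andbF; case: ifP.
by rewrite andbT Des_opn // andbT.
Qed.


Lemma par_comp_in (K : {set S}) (w : W) : in_parabolic K w -> par_comp K w = w.
Proof.
move=> hw; apply: (par_compE (a := e)) => //; last by rewrite mul1w.
by move=> s _; rewrite mul1w length1 length_gen.
Qed.

Lemma le_refl (x : W) : cox_le x x.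
Proof. by rewrite /cox_le par_comp_in //; apply: in_par_supp. Qed.

Lemma mem_int_le (v x z : W) : cox_le x v ->
  (z \in cox_interval e x) = `[< cox_le z v >] && (supp z \subset supp x).
Proof.
move=> hx; rewrite mem_interval.
apply/asboolP/andP => [h|[/asboolP h1 h2]].
  by have [h1 h2] := le_trans_v hx h; split => //; apply/asboolP.
exact: le_of_v hx h1 h2.
Qed.

Lemma sum_mu (v x : W) : cox_le x v -> x != e ->
  \sum_(z <- cox_interval e x) muK v (supp z) = 0.
Proof.
move=> hx hne.
rewrite (@sum_reindex _ v (supp x) _ (muK v) (uniq_interval x)); last first.
  by move=> z; apply: mem_int_le.
rewrite /muK (@sum_opn _ v (supp x) (fun K => (-1) ^+ #|K|)) sum_subsets subrr expr0n.
have [s [hs1 hs2]] := le_Des hx hne.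
suff : #|supp x :&: Des v| != 0%N by move/negbTE => ->.
by rewrite -lt0n card_gt0; apply/set0Pn; exists s; rewrite inE hs1 hs2.
Qed.

Lemma mobius_fuelS n (x y : W) : mobius_fuel n.+1 x y =
  if x == y then 1 else if `[< cox_le x y >] then
    - \sum_(z <- cox_interval x y | z != y) mobius_fuel n x z else 0.
Proof. by []. Qed.

Lemma size_int_lt (x z : W) : cox_le z x -> z != x ->
  (size (cox_interval e z) < size (cox_interval e x))%N.
Proof.
move=> hz hne.
have hx : x \in cox_interval e x by rewrite mem_interval; apply/asboolP; apply: le_refl.
have : (size (cox_interval e z) <= size (rem x (cox_interval e x)))%N.
  apply: uniq_leq_size; first exact: uniq_interval.
  move=> y; rewrite (mem_rem_uniq _ (uniq_interval x)) !mem_interval => /asboolP hy.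
  have [hyx _] := le_trans_v hz hy.
  rewrite inE; apply/andP; split; last by rewrite mem_interval; apply/asboolP.
  apply/eqP => E; move: hy; rewrite E => hxz.
  have [_ s1] := le_trans_v hz hxz.
  have [_ s2] := le_trans_v (le_refl x) hz.
  have := le_inj (le_refl x) hz (ltac:(by apply/eqP; rewrite eqEsubset s1 s2)).
  by move=> E'; move: hne; rewrite E' eqxx.
rewrite size_rem // => h; apply: (leq_ltn_trans h).
by case: (cox_interval e x) hx => //= a l _.
Qed.

Lemma mobius_val (v x : W) : cox_le x v -> mobius e x = muK v (supp x).
Proof.
suff H : forall m x, cox_le x v -> (size (cox_interval e x) <= m)%N ->
    mobius_fuel m.+1 e x = muK v (supp x).
  by move=> hx; apply: H.
elim=> [|m IH] {}x hx hsz.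
  by move: hsz; rewrite leqn0 => /nilP hn; have := mem_interval x x;
     rewrite hn in_nil => /esym/asboolP; case; apply: le_refl.
rewrite mobius_fuelS; case: eqVneq => [<-|hne].
  by rewrite /muK supp1 sub0set cards0 expr0.
rewrite (asboolT (le_e x)).
have hsum : \sum_(z <- cox_interval e x | z != x) mobius_fuel m.+1 e z =
            \sum_(z <- cox_interval e x | z != x) muK v (supp z).
  rewrite big_seq_cond [RHS]big_seq_cond; apply: eq_bigr => z /andP [hz hzx].
  have hzx' : cox_le z x by move: hz; rewrite mem_interval => /asboolP.
  move: hz; rewrite (mem_int_le _ hx) => /andP [/asboolP hzv _].
  apply: IH => //; rewrite -ltnS; apply: leq_trans hsz.
  exact: size_int_lt.
have hxi : x \in cox_interval e x by rewrite mem_interval; apply/asboolP; apply: le_refl.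
have := sum_mu hx (ltac:(by rewrite eq_sym)).
rewrite (bigD1_seq x hxi (uniq_interval x)) -hsum.
by move/eqP; rewrite addr_eq0 => /eqP ->.
Qed.

End Mob.

End CoxDev.
Import CoxDev.

Local Open Scope ring_scope.

Theorem mainTheorem13 (C : coxeter_system) (v : cW C) :
  \sum_(x <- cox_interval (cone C) v) (mobius (cone C) x)%:P * 'X^#|supp x|
  = (1 - 'X) ^+ #|Des v| :> {poly int}.
Proof.
transitivity (\sum_(x <- cox_interval (cone C) v) ((muK v (supp x))%:P * 'X^#|supp x|) : {poly int}).
  rewrite big_seq [RHS]big_seq; apply: eq_bigr => x hx.
  by rewrite (mobius_val (v := v)) //; move: hx; rewrite mem_interval => /asboolP.
have hmem : forall z, z \in cox_interval (cone C) v = `[< cox_le z v >] && (supp z \subset setT).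
  by move=> z; rewrite mem_interval subsetT andbT.
have := @sum_reindex _ _ v setT _ (fun K => (muK v K)%:P * 'X^#|K| : {poly int}) (uniq_interval v) hmem.
move=> /= ->.
transitivity (\sum_(K : {set cS C} | (K \subset setT) && opn v K)
   (if K \subset Des v then (- 'X) ^+ #|K| else 0) : {poly int}).
  apply: eq_bigr => K _; rewrite /muK; case: ifP => _; last by rewrite mul0r.
  by rewrite rmorphXn rmorphN rmorph1 [RHS]exprNn.
by rewrite (@sum_opn _ _ v setT (fun K => (- 'X) ^+ #|K|)) setTI sum_subsets.
Qed.
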